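(* Every countably compact hereditarily normal topological group that contains a non-trivial convergent sequence is metrizable.
   Context: All spaces are assumed to be $T_1$. A non-trivial convergent sequence is a subspace homeomorphic to the subspace $\{0\}\cup\{1/n : n=1,2,3,\dots\}$ of the real line. *)

(* Defs.v *)
From Stdlib Require Import Reals.
Open Scope R_scope.

Record is_topology {X : Type} (op : (X -> Prop) -> Prop) : Prop := {
  top_full  : op (fun _ => True);
  top_inter : forall U V, op U -> op V -> op (fun x => U x /\ V x);
  top_union : forall F : (X -> Prop) -> Prop,
      (forall U, F U -> op U) -> op (fun x => exists U, F U /\ U x)
}.

Definition is_closed {X : Type} (op : (X -> Prop) -> Prop) (C : X -> Prop) : Prop :=
  op (fun x => ~ C x).

Definition T1 {X : Type} (op : (X -> Prop) -> Prop) : Prop :=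
  forall x y : X, x <> y -> exists U, op U /\ U x /\ ~ U y.

Definition subspace_open {X : Type} (op : (X -> Prop) -> Prop) (A : X -> Prop)
  (W : {x : X | A x} -> Prop) : Prop :=
  exists U, op U /\ forall a : {x : X | A x}, W a <-> U (proj1_sig a).

Definition product_open {X Y : Type} (opX : (X -> Prop) -> Prop)
  (opY : (Y -> Prop) -> Prop) (W : X * Y -> Prop) : Prop :=
  forall p, W p -> exists U V, opX U /\ opY V /\ U (fst p) /\ V (snd p) /\
    forall x y, U x -> V y -> W (x, y).

Definition continuous {X Y : Type} (opX : (X -> Prop) -> Prop)
  (opY : (Y -> Prop) -> Prop) (f : X -> Y) : Prop :=
  forall V, opY V -> opX (fun x => V (f x)).

Definition homeomorphic {X Y : Type} (opX : (X -> Prop) -> Prop)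
  (opY : (Y -> Prop) -> Prop) : Prop :=
  exists (f : X -> Y) (g : Y -> X),
    (forall x, g (f x) = x) /\ (forall y, f (g y) = y) /\
    continuous opX opY f /\ continuous opY opX g.

Record is_topological_group {X : Type} (op : (X -> Prop) -> Prop)
  (mul : X -> X -> X) (inv : X -> X) (e : X) : Prop := {
  tg_top     : is_topology op;
  tg_assoc   : forall x y z, mul x (mul y z) = mul (mul x y) z;
  tg_unit_l  : forall x, mul e x = x;
  tg_unit_r  : forall x, mul x e = x;
  tg_inv_l   : forall x, mul (inv x) x = e;
  tg_inv_r   : forall x, mul x (inv x) = e;
  tg_mul_cont : continuous (product_open op op) op (fun p => mul (fst p) (snd p));
  tg_inv_cont : continuous op op inv
}.

Definition countably_compact {X : Type} (op : (X -> Prop) -> Prop) : Prop :=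
  forall U : nat -> (X -> Prop),
    (forall n, op (U n)) -> (forall x, exists n, U n x) ->
    exists N, forall x, exists n, (n <= N)%nat /\ U n x.

(** Normality of a space (separation of disjoint closed sets by disjoint open
    sets; T1 is a standing assumption and is imposed separately). *)
Definition normal {X : Type} (op : (X -> Prop) -> Prop) : Prop :=
  forall F G : X -> Prop, is_closed op F -> is_closed op G ->
    (forall x, F x -> G x -> False) ->
    exists U V, op U /\ op V /\ (forall x, F x -> U x) /\ (forall x, G x -> V x) /\
      (forall x, U x -> V x -> False).

Definition hereditarily_normal {X : Type} (op : (X -> Prop) -> Prop) : Prop :=
  forall A : X -> Prop, normal (subspace_open op A).

Definition R_open (U : R -> Prop) : Prop :=
  forall x, U x -> exists eps, eps > 0 /\ forall y, Rabs (y - x) < eps -> U y.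

Definition conv_seq_set (x : R) : Prop :=
  x = 0 \/ exists n : nat, (n >= 1)%nat /\ x = / INR n.

Definition has_nontrivial_convergent_sequence {X : Type}
  (op : (X -> Prop) -> Prop) : Prop :=
  exists A : X -> Prop,
    homeomorphic (subspace_open R_open conv_seq_set) (subspace_open op A).

Definition metrizable {X : Type} (op : (X -> Prop) -> Prop) : Prop :=
  exists d : X -> X -> R,
    (forall x y, d x y = 0 <-> x = y) /\
    (forall x y, d x y = d y x) /\
    (forall x y z, d x z <= d x y + d y z) /\
    (forall U, op U <-> forall x, U x -> exists eps, eps > 0 /\
                                   forall y, d x y < eps -> U y).

(* Main.v *)
Require Import Defs.
From Stdlib Require Import Reals Lra Lia List.
From Stdlib Require Import Classical ClassicalEpsilon FunctionalExtensionality PropExtensionality ProofIrrelevance.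
Open Scope R_scope.

Lemma op_ext {X : Type} (op : (X -> Prop) -> Prop) (U V : X -> Prop) :
  (forall x, U x <-> V x) -> op U -> op V.
Proof.
  intros H HU. replace V with U; auto.
  apply functional_extensionality; intro x; apply propositional_extensionality; auto.
Qed.

Lemma op_local {X : Type} (op : (X -> Prop) -> Prop) (U : X -> Prop) :
  is_topology op ->
  (forall x, U x -> exists V, op V /\ V x /\ forall y, V y -> U y) -> op U.
Proof.
  intros T H.
  apply (op_ext op (fun x => exists V, (op V /\ forall y, V y -> U y) /\ V x)).
  - intro x; split.
    + intros [V [[_ HV] Vx]]; auto.
    + intro Ux. destruct (H x Ux) as [V [oV [Vx HV]]]. exists V; auto.
  - apply (top_union _ T). intros V [oV _]; auto.
Qed.

Lemma op_neq {X : Type} (op : (X -> Prop) -> Prop) (a : X) :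
  is_topology op -> T1 op -> op (fun x => x <> a).
Proof.
  intros T H1. apply op_local; auto. intros x Hx.
  destruct (H1 x a Hx) as [U [oU [Ux nUa]]]. exists U; repeat split; auto.
  intros y Uy E; subst; auto.
Qed.

Lemma op_and {X : Type} (op : (X -> Prop) -> Prop) U V :
  is_topology op -> op U -> op V -> op (fun x => U x /\ V x).
Proof. intros T; apply (top_inter _ T). Qed.

Lemma inv_unique {X} (op : (X -> Prop) -> Prop) mul inv e :
  is_topological_group op mul inv e -> forall u v, mul u v = e -> v = inv u.
Proof.
  intros G u v H.
  rewrite <- (tg_unit_l _ _ _ _ G v), <- (tg_inv_l _ _ _ _ G u), <- (tg_assoc _ _ _ _ G), H.
  apply (tg_unit_r _ _ _ _ G).
Qed.

Lemma inv_inv {X} (op : (X -> Prop) -> Prop) mul inv e :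
  is_topological_group op mul inv e -> forall a, inv (inv a) = a.
Proof.
  intros G a. symmetry. apply (inv_unique _ _ _ _ G). apply (tg_inv_l _ _ _ _ G).
Qed.

Lemma inv_mul_sym {X} (op : (X -> Prop) -> Prop) mul inv e :
  is_topological_group op mul inv e -> forall x y, inv (mul (inv x) y) = mul (inv y) x.
Proof.
  intros G x y. symmetry. apply (inv_unique _ _ _ _ G).
  rewrite <- (tg_assoc _ _ _ _ G), (tg_assoc _ _ _ _ G y), (tg_inv_r _ _ _ _ G),
    (tg_unit_l _ _ _ _ G). apply (tg_inv_l _ _ _ _ G).
Qed.

Lemma mul_cancel_l {X} (op : (X -> Prop) -> Prop) mul inv e :
  is_topological_group op mul inv e -> forall x y, mul x (mul (inv x) y) = y.
Proof.
  intros G x y. rewrite (tg_assoc _ _ _ _ G), (tg_inv_r _ _ _ _ G). apply (tg_unit_l _ _ _ _ G).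
Qed.

Lemma mul_cancel_r {X} (op : (X -> Prop) -> Prop) mul inv e :
  is_topological_group op mul inv e -> forall s a, mul (mul s (inv a)) a = s.
Proof.
  intros G s a. rewrite <- (tg_assoc _ _ _ _ G), (tg_inv_l _ _ _ _ G). apply (tg_unit_r _ _ _ _ G).
Qed.

Lemma mul_chain3 {X} (op : (X -> Prop) -> Prop) mul inv e :
  is_topological_group op mul inv e -> forall x y z w,
  mul (mul (mul (inv x) y) (mul (inv y) z)) (mul (inv z) w) = mul (inv x) w.
Proof.
  intros G x y z w.
  rewrite <- (tg_assoc _ _ _ _ G (inv x) y), (mul_cancel_l _ _ _ _ G).
  rewrite <- (tg_assoc _ _ _ _ G (inv x) z), (mul_cancel_l _ _ _ _ G). auto.
Qed.

Lemma op_ltrans {X} (op : (X -> Prop) -> Prop) mul inv e :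
  is_topological_group op mul inv e -> forall c W, op W -> op (fun x => W (mul c x)).
Proof.
  intros G c W oW. apply op_local; [apply (tg_top _ _ _ _ G)|]. intros x Wx.
  pose proof (tg_mul_cont _ _ _ _ G W oW (c, x) Wx) as [U [V [oU [oV [Uc [Vx H]]]]]].
  exists V; repeat split; auto. intros y Vy. apply (H c y); auto.
Qed.

Lemma op_rtrans {X} (op : (X -> Prop) -> Prop) mul inv e :
  is_topological_group op mul inv e -> forall c W, op W -> op (fun x => W (mul x c)).
Proof.
  intros G c W oW. apply op_local; [apply (tg_top _ _ _ _ G)|]. intros x Wx.
  pose proof (tg_mul_cont _ _ _ _ G W oW (x, c) Wx) as [U [V [oU [oV [Ux [Vc H]]]]]].
  exists U; repeat split; auto. intros y Uy. apply (H y c); auto.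
Qed.

Lemma nbhd_sq {X} (op : (X -> Prop) -> Prop) mul inv e :
  is_topological_group op mul inv e -> forall W, op W -> W e ->
  exists V, op V /\ V e /\ (forall a, V a -> W a) /\ forall a b, V a -> V b -> W (mul a b).
Proof.
  intros G W oW We.
  assert (We' : W (mul (fst (e,e)) (snd (e,e)))) by (simpl; rewrite (tg_unit_l _ _ _ _ G); auto).
  pose proof (tg_mul_cont _ _ _ _ G W oW (e, e) We') as [U [V [oU [oV [Ue [Ve H]]]]]].
  exists (fun x => (U x /\ V x) /\ W x). repeat split; auto.
  - apply op_and; auto; [apply (tg_top _ _ _ _ G)| apply op_and; auto; apply (tg_top _ _ _ _ G)].
  - intros a [_ Wa]; auto.
  - intros a b [[Ua _] _] [[_ Vb] _]. apply H; auto.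
Qed.

Lemma nbhd_cube {X} (op : (X -> Prop) -> Prop) mul inv e :
  is_topological_group op mul inv e -> forall W, op W -> W e ->
  exists V, op V /\ V e /\ (forall a, V a -> V (inv a)) /\
     forall a b c, V a -> V b -> V c -> W (mul (mul a b) c).
Proof.
  intros G W oW We.
  destruct (nbhd_sq _ _ _ _ G W oW We) as [V1 [oV1 [V1e [V1W H1]]]].
  destruct (nbhd_sq _ _ _ _ G V1 oV1 V1e) as [V2 [oV2 [V2e [V2V1 H2]]]].
  exists (fun a => V2 a /\ V2 (inv a)). split; [|split; [|split]].
  - apply op_and; [apply (tg_top _ _ _ _ G)|auto|]. apply (tg_inv_cont _ _ _ _ G); auto.
  - assert (inv e = e). { symmetry; apply (inv_unique _ _ _ _ G); apply (tg_unit_l _ _ _ _ G). }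
    rewrite H; auto.
  - intros a [H3 H4]; rewrite (inv_inv _ _ _ _ G); tauto.
  - intros a b c [Va _] [Vb _] [Vc _]. apply H1; auto.
Qed.

Record goodB {X} (op : (X -> Prop) -> Prop) (mul : X -> X -> X) (inv : X -> X) (e : X) (B : nat -> X -> Prop) : Prop := {
 gB_open : forall k, op (B k); gB_e : forall k, B k e; gB_sym : forall k a, B k a -> B k (inv a);
 gB_0 : forall g, B 0%nat g;
 gB_cube : forall k a b c, B (S k) a -> B (S k) b -> B (S k) c -> B k (mul (mul a b) c);
 gB_base : forall U, op U -> U e -> exists k, forall g, B k g -> U g }.

Lemma least_nat (P : nat -> Prop) : (exists n, P n) -> exists m, P m /\ forall k, (k < m)%nat -> ~ P k.
Proof.
  intros [n Hn]. revert Hn. induction n as [n IH] using (well_founded_induction Wf_nat.lt_wf). intros Pn.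
  destruct (classic (exists k, (k < n)%nat /\ P k)) as [[k [Hk Pk]]|Hno].
  - exact (IH k Hk Pk).
  - exists n; split; auto. intros k Hk Pk; apply Hno; eauto.
Qed.

Definition RS {X} (B : nat -> X -> Prop) (g : X) (r : R) : Prop :=
  (r = 0 /\ forall k, B k g) \/
  (exists m, r = (/2)^m /\ ~ B m g /\ forall k, (k < m)%nat -> B k g).

Lemma RS_ex {X} (B : nat -> X -> Prop) g : exists r, RS B g r.
Proof.
  destruct (classic (forall k, B k g)) as [H|H].
  - exists 0; left; auto.
  - apply not_all_ex_not in H. destruct (least_nat _ H) as [m [Hm Hl]].
    exists ((/2)^m); right; exists m; repeat split; auto.
    intros k Hk; apply NNPP; apply Hl; auto.
Qed.

Definition rr {X} (B : nat -> X -> Prop) (g : X) : R :=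
  proj1_sig (constructive_indefinite_description _ (RS_ex B g)).

Lemma rr_spec {X} (B : nat -> X -> Prop) g : RS B g (rr B g).
Proof. unfold rr; destruct (constructive_indefinite_description _ _); auto. Qed.

Lemma half_pow_pos n : 0 < (/2)^n.
Proof. apply pow_lt; lra. Qed.

Lemma half_pow_S n : (/2)^(S n) = (/2)^n / 2.
Proof. simpl; lra. Qed.

Lemma half_pow_le n m : (n <= m)%nat -> (/2)^m <= (/2)^n.
Proof.
  induction 1; [lra|]. rewrite half_pow_S. pose proof (half_pow_pos m); lra.
Qed.

Lemma half_pow_small eps : 0 < eps -> exists k, (/2)^k < eps.
Proof.
  intro H. destruct (pow_lt_1_zero (/2)) with (y := eps) as [N HN]; auto.
  rewrite Rabs_right; lra.
  exists N. specialize (HN N (le_n _)). rewrite Rabs_right in HN; auto.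
  left; apply half_pow_pos.
Qed.


Lemma B_mono {X} op mul inv e (B : nat -> X -> Prop) :
  is_topological_group op mul inv e -> goodB op mul inv e B ->
  forall k m g, (k <= m)%nat -> B m g -> B k g.
Proof.
  intros G HB k m g H. induction H; auto.
  intro Hg. apply IHle. pose proof (gB_cube _ _ _ _ _ HB m g e e Hg (gB_e _ _ _ _ _ HB _) (gB_e _ _ _ _ _ HB _)).
  rewrite !(tg_unit_r _ _ _ _ G) in H0; auto.
Qed.

Lemma RS_unique {X} (B : nat -> X -> Prop) g r1 r2 : RS B g r1 -> RS B g r2 -> r1 = r2.
Proof.
  intros [[-> H1]|[m1 [-> [H1 H1']]]] [[-> H2]|[m2 [-> [H2 H2']]]]; auto.
  - exfalso; auto.
  - exfalso; auto.
  - destruct (Nat.lt_trichotomy m1 m2) as [h|[h|h]].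
    + exfalso; apply H1; auto.
    + subst; auto.
    + exfalso; apply H2; auto.
Qed.

Lemma rr_nonneg {X} (B : nat -> X -> Prop) g : 0 <= rr B g.
Proof.
  destruct (rr_spec B g) as [[-> _]|[m [-> _]]]; [lra|left; apply half_pow_pos].
Qed.

Lemma rr_in {X} op mul inv e (B : nat -> X -> Prop) :
  is_topological_group op mul inv e -> goodB op mul inv e B ->
  forall k g, B k g -> rr B g <= (/2)^(S k).
Proof.
  intros G HB k g Hk. destruct (rr_spec B g) as [[Hr _]|[m [Hr [H1 H2]]]]; rewrite Hr.
  - left; apply half_pow_pos.
  - apply half_pow_le. destruct (Compare_dec.le_lt_dec m k) as [h|h]; [|lia].
    exfalso; apply H1. apply (B_mono _ _ _ _ _ G HB m k); auto.
Qed.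

Lemma rr_lt {X} (B : nat -> X -> Prop) :
  forall k g, rr B g < (/2)^k -> B k g.
Proof.
  intros k g Hk. destruct (rr_spec B g) as [[Hr H]|[m [Hr [H1 H2]]]]; auto. rewrite Hr in Hk.
  apply H2. destruct (Compare_dec.le_lt_dec m k) as [h|h]; auto.
  pose proof (half_pow_le _ _ h); lra.
Qed.

Lemma rr_zero {X} (B : nat -> X -> Prop) g : rr B g = 0 -> forall k, B k g.
Proof.
  intro H0. destruct (rr_spec B g) as [[_ H]|[m [Hm _]]]; auto.
  pose proof (half_pow_pos m); lra.
Qed.

Lemma rr_e {X} op mul inv e (B : nat -> X -> Prop) :
  goodB op mul inv e B -> rr B e = 0.
Proof.
  intro HB. apply (RS_unique B e); [apply rr_spec|]. left; split; auto. apply (gB_e _ _ _ _ _ HB).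
Qed.

Lemma rr_inv {X} op mul inv e (B : nat -> X -> Prop) :
  is_topological_group op mul inv e -> goodB op mul inv e B ->
  forall g, rr B (inv g) = rr B g.
Proof.
  intros G HB g. apply (RS_unique B (inv g)); [apply rr_spec|].
  assert (Hiff : forall k, B k g <-> B k (inv g)).
  { intro k; split; [apply (gB_sym _ _ _ _ _ HB)|]. intro h.
    rewrite <- (inv_inv _ _ _ _ G g). apply (gB_sym _ _ _ _ _ HB); auto. }
  destruct (rr_spec B g) as [[Hr H]|[m [Hr [H1 H2]]]].
  - left; split; auto. intro k; apply Hiff; auto.
  - right; exists m; repeat split; auto.
    + rewrite <- Hiff; auto.
    + intros k Hk; apply Hiff; auto.
Qed.

Lemma rr_cube {X} op mul inv e (B : nat -> X -> Prop) :
  is_topological_group op mul inv e -> goodB op mul inv e B ->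
  forall a b c, rr B (mul (mul a b) c) <= 2 * Rmax (rr B a) (Rmax (rr B b) (rr B c)).
Proof.
  intros G HB a b c.
  set (M := Rmax (rr B a) (Rmax (rr B b) (rr B c))).
  assert (Ha : rr B a <= M) by (unfold M; apply Rmax_l).
  assert (Hb : rr B b <= M) by (unfold M; eapply Rle_trans; [apply Rmax_l|apply Rmax_r]).
  assert (Hc : rr B c <= M) by (unfold M; eapply Rle_trans; [apply Rmax_r|apply Rmax_r]).
  pose proof (rr_nonneg B a).
  destruct (Rle_lt_dec (rr B (mul (mul a b) c)) (2 * M)) as [h|h]; auto. exfalso.
  destruct (rr_spec B (mul (mul a b) c)) as [[Hr _]|[p [Hp [H1 _]]]]; [lra|].
  apply H1. apply (gB_cube _ _ _ _ _ HB); apply rr_lt; rewrite half_pow_S; lra.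
Qed.

Fixpoint cs {X} (rho : X -> X -> R) (x : X) (l : list X) : R :=
  match l with nil => 0 | q :: l' => rho x q + cs rho q l' end.
Fixpoint lst {X} (x : X) (l : list X) : X :=
  match l with nil => x | q :: l' => lst q l' end.

Lemma cs_nonneg {X} (rho : X -> X -> R) : (forall x y, 0 <= rho x y) -> forall l x, 0 <= cs rho x l.
Proof. intros H l; induction l; intro x; simpl; [lra|]. specialize (H x a); specialize (IHl a); lra. Qed.

Lemma cs_app {X} (rho : X -> X -> R) l1 l2 x : cs rho x (l1 ++ l2) = cs rho x l1 + cs rho (lst x l1) l2.
Proof. revert x; induction l1; intro x; simpl; [lra|]. rewrite IHl1; lra. Qed.

Lemma lst_app {X} (l1 l2 : list X) x : lst x (l1 ++ l2) = lst (lst x l1) l2.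
Proof. revert x; induction l1; intro x; simpl; auto. Qed.

Lemma split_chain {X} (rho : X -> X -> R) : (forall x y, 0 <= rho x y) ->
  forall l x t, 0 <= t -> l <> nil -> exists l1 q l2, l = l1 ++ q :: l2 /\
     cs rho x l1 <= t /\ cs rho q l2 <= Rmax 0 (cs rho x l - t).
Proof.
  intros Hnn l; induction l as [|q R IH]; intros x t Ht Hl; [congruence|].
  destruct (Rlt_le_dec t (rho x q)) as [h|h].
  - exists nil, q, R. simpl. repeat split; auto. eapply Rle_trans; [|apply Rmax_r]. lra.
  - destruct R as [|q' R'].
    + exists nil, q, nil. simpl. repeat split; auto. apply Rmax_l.
    + destruct (IH q (t - rho x q)) as [l1 [q2 [l2 [E [H1 H2]]]]]; [lra|congruence|].
      exists (q :: l1), q2, l2. rewrite E. simpl. repeat split; auto.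
      * lra.
      * rewrite E in H2. replace (rho x q + cs rho q (l1 ++ q2 :: l2) - t)
          with (cs rho q (l1 ++ q2 :: l2) - (t - rho x q)) by lra. auto.
Qed.

Lemma chain_bound {X} (rho : X -> X -> R) :
  (forall x y, 0 <= rho x y) -> (forall x, rho x x = 0) ->
  (forall x y z w, rho x w <= 2 * Rmax (rho x y) (Rmax (rho y z) (rho z w))) ->
  forall n l x, (length l <= n)%nat -> rho x (lst x l) <= 2 * cs rho x l.
Proof.
  intros Hnn H0 H3 n; induction n as [|n IH]; intros l x Hlen.
  - destruct l; simpl in *; [rewrite H0; lra| lia].
  - destruct l as [|q0 l0] eqn:El; [simpl; rewrite H0; lra|].
    rewrite <- El in *. set (Sm := cs rho x l).
    assert (HS : 0 <= Sm) by (apply cs_nonneg; auto).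
    destruct (split_chain rho Hnn l x (Sm/2)) as [l1 [q [l2 [E [H1 H2]]]]]; [lra|subst l; congruence|].
    assert (Hl : length l = (length l1 + Datatypes.S (length l2))%nat) by (rewrite E, length_app; simpl; auto).
    assert (E2 : Sm = cs rho x l1 + rho (lst x l1) q + cs rho q l2).
    { unfold Sm. rewrite E, cs_app. simpl. lra. }
    assert (A1 : rho x (lst x l1) <= Sm).
    { eapply Rle_trans; [apply IH; lia|]. lra. }
    assert (A2 : rho (lst x l1) q <= Sm).
    { pose proof (cs_nonneg rho Hnn l1 x); pose proof (cs_nonneg rho Hnn l2 q); lra. }
    assert (A3 : rho q (lst q l2) <= Sm).
    { change (cs rho x l) with Sm in H2. eapply Rle_trans; [apply IH; lia|].
      rewrite Rmax_right in H2; lra. }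
    assert (Elst : lst x l = lst q l2) by (rewrite E, lst_app; auto).
    rewrite Elst. eapply Rle_trans; [apply (H3 _ (lst x l1) q)|].
    apply Rmult_le_compat_l; [lra|]. apply Rmax_lub; auto. apply Rmax_lub; auto.
Qed.

Definition Eset {X} (rho : X -> X -> R) x y (r : R) : Prop := exists l, lst x l = y /\ r = - cs rho x l.
Definition dd {X} (rho : X -> X -> R) x y : R := - epsilon (inhabits 0) (is_lub (Eset rho x y)).

Lemma dd_lub {X} (rho : X -> X -> R) : (forall x y, 0 <= rho x y) ->
  forall x y, is_lub (Eset rho x y) (- dd rho x y).
Proof.
  intros Hnn x y. unfold dd. rewrite Ropp_involutive. apply epsilon_spec.
  destruct (completeness (Eset rho x y)) as [m Hm].
  - exists 0. intros r [l [_ ->]]. pose proof (cs_nonneg rho Hnn l x). lra.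
  - exists (- cs rho x (y :: nil)). exists (y :: nil); auto.
  - eauto.
Qed.

Lemma dd_le {X} (rho : X -> X -> R) : (forall x y, 0 <= rho x y) ->
  forall x y l, lst x l = y -> dd rho x y <= cs rho x l.
Proof.
  intros Hnn x y l H. destruct (dd_lub rho Hnn x y) as [Hu _].
  assert (- cs rho x l <= - dd rho x y) by (apply Hu; exists l; auto). lra.
Qed.

Lemma dd_ge {X} (rho : X -> X -> R) : (forall x y, 0 <= rho x y) ->
  forall x y c, (forall l, lst x l = y -> c <= cs rho x l) -> c <= dd rho x y.
Proof.
  intros Hnn x y c H. destruct (dd_lub rho Hnn x y) as [_ Hl].
  assert (- dd rho x y <= - c). { apply Hl. intros r [l [E ->]]. specialize (H l E). lra. }
  lra.
Qed.

Lemma rev_chain {X} (rho : X -> X -> R) : (forall x y, rho x y = rho y x) ->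
  forall l x, exists l', lst (lst x l) l' = x /\ cs rho (lst x l) l' = cs rho x l.
Proof.
  intros Hs l; induction l as [|q r IH]; intro x.
  - exists nil; simpl; auto.
  - destruct (IH q) as [r' [E1 E2]]. exists (r' ++ x :: nil). simpl.
    rewrite lst_app, cs_app, E1, E2. simpl. rewrite (Hs q x). split; [auto|lra].
Qed.

Lemma metric_from_B {X} (op : (X -> Prop) -> Prop) mul inv e (B : nat -> X -> Prop) :
  is_topological_group op mul inv e -> T1 op -> goodB op mul inv e B -> metrizable op.
Proof.
  intros G HT1 HB.
  set (rho := fun x y => rr B (mul (inv x) y)).
  assert (Hnn : forall x y, 0 <= rho x y) by (intros; apply rr_nonneg).
  assert (H0 : forall x, rho x x = 0).
  { intro x; unfold rho; rewrite (tg_inv_l _ _ _ _ G). apply (rr_e _ _ _ _ _ HB). }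
  assert (Hs : forall x y, rho x y = rho y x).
  { intros x y; unfold rho. rewrite <- (inv_mul_sym _ _ _ _ G). apply (rr_inv _ _ _ _ _ G HB). }
  assert (H3 : forall x y z w, rho x w <= 2 * Rmax (rho x y) (Rmax (rho y z) (rho z w))).
  { intros x y z w; unfold rho. rewrite <- (mul_chain3 _ _ _ _ G x y z w). apply (rr_cube _ _ _ _ _ G HB). }
  assert (Hz : forall x y, rho x y = 0 -> x = y).
  { intros x y H. pose proof (rr_zero B _ H) as Hk.
    assert (Hg : mul (inv x) y = e).
    { apply NNPP; intro Hne. destruct (HT1 e _ (not_eq_sym Hne)) as [U [oU [Ue nU]]].
      destruct (gB_base _ _ _ _ _ HB U oU Ue) as [k Hk']. apply nU, Hk', Hk. }
    rewrite <- (mul_cancel_l _ _ _ _ G x y), Hg. symmetry. apply (tg_unit_r _ _ _ _ G). }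
  assert (Hrd : forall x y, rho x y <= 2 * dd rho x y).
  { intros x y. cut (rho x y / 2 <= dd rho x y); [lra|]. apply dd_ge; auto.
    intros l E. subst y. pose proof (chain_bound rho Hnn H0 H3 (length l) l x (le_n _)). lra. }
  assert (Hdr : forall x y, dd rho x y <= rho x y).
  { intros x y. eapply Rle_trans; [apply (dd_le rho Hnn x y (y :: nil)); auto|]. simpl; lra. }
  assert (Hdnn : forall x y, 0 <= dd rho x y).
  { intros x y. apply dd_ge; auto. intros l _. apply cs_nonneg; auto. }
  assert (Hdsym : forall x y, dd rho y x <= dd rho x y).
  { intros x y. apply dd_ge; auto. intros l E. subst y.
    destruct (rev_chain rho Hs l x) as [l' [E1 E2]]. rewrite <- E2. apply dd_le; auto. }
  exists (dd rho). split; [|split; [|split]].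
  - intros x y; split.
    + intro H. apply Hz. pose proof (Hrd x y). pose proof (Hnn x y). lra.
    + intros ->. pose proof (Hdr y y). rewrite H0 in H. pose proof (Hdnn y y). lra.
  - intros x y. pose proof (Hdsym x y); pose proof (Hdsym y x); lra.
  - intros x y z.
    cut (dd rho x z - dd rho y z <= dd rho x y); [lra|]. apply dd_ge; auto. intros l1 E1.
    cut (dd rho x z - cs rho x l1 <= dd rho y z); [lra|]. apply dd_ge; auto. intros l2 E2.
    cut (dd rho x z <= cs rho x (l1 ++ l2)); [rewrite cs_app, E1; lra|].
    apply dd_le; auto. rewrite lst_app, E1; auto.
  - intro U; split.
    + intros oU x Ux.
      pose proof (op_ltrans _ _ _ _ G x U oU) as oW.
      assert (We : U (mul x e)) by (rewrite (tg_unit_r _ _ _ _ G); auto).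
      destruct (gB_base _ _ _ _ _ HB _ oW We) as [k Hk].
      exists ((/2)^k / 2). split; [pose proof (half_pow_pos k); lra|].
      intros y Hy. rewrite <- (mul_cancel_l _ _ _ _ G x y). apply Hk.
      apply rr_lt. fold (rho x y). pose proof (Hrd x y). lra.
    + intros H. apply op_local; [apply (tg_top _ _ _ _ G)|]. intros x Ux.
      destruct (H x Ux) as [eps [Heps Hb]].
      destruct (half_pow_small eps Heps) as [k Hk].
      exists (fun y => B k (mul (inv x) y)). split; [|split].
      * apply (op_ltrans _ _ _ _ G). apply (gB_open _ _ _ _ _ HB).
      * rewrite (tg_inv_l _ _ _ _ G). apply (gB_e _ _ _ _ _ HB).
      * intros y Hy. apply Hb. pose proof (rr_in _ _ _ _ _ G HB k _ Hy).
        pose proof (Hdr x y). unfold rho in *. rewrite half_pow_S in H1.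
        pose proof (half_pow_pos k). lra.
Qed.

Lemma goodB_exists {X} (op : (X -> Prop) -> Prop) mul inv e (D : nat -> X -> Prop) :
  is_topological_group op mul inv e ->
  (forall n, op (D n) /\ D n e) ->
  (forall U, op U -> U e -> exists n, forall g, D n g -> U g) ->
  exists B, goodB op mul inv e B.
Proof.
  intros G HD Hbase.
  pose (P := fun (W V : X -> Prop) => (op W /\ W e) -> op V /\ V e /\ (forall a, V a -> V (inv a)) /\
     forall a b c, V a -> V b -> V c -> W (mul (mul a b) c)).
  assert (Hex : forall W, exists V, P W V).
  { intro W. destruct (classic (op W /\ W e)) as [[oW We]|Hn].
    - destruct (nbhd_cube _ _ _ _ G W oW We) as [V HV]. exists V; intros _; auto.
    - exists W; intro h; contradiction. }
  pose (fS := fun W => proj1_sig (constructive_indefinite_description _ (Hex W))).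
  assert (HfS : forall W, P W (fS W)) by (intro W; unfold fS; destruct (constructive_indefinite_description _ _); auto).
  pose (B := fix B k := match k with O => fun _ : X => True | S k => fS (fun g => B k g /\ D k g) end).
  assert (HB1 : forall k, op (B k) /\ B k e /\ forall a, B k a -> B k (inv a)).
  { induction k as [|k IH].
    - simpl. repeat split; auto. apply (top_full _ (tg_top _ _ _ _ G)).
    - destruct IH as [o1 [e1 s1]]. destruct (HfS (fun g => B k g /\ D k g)) as [h1 [h2 [h3 h4]]].
      + split; [apply op_and; [apply (tg_top _ _ _ _ G)|auto|apply HD]|split; auto; apply HD].
      + simpl. auto. }
  assert (HB2 : forall k a b c, B (S k) a -> B (S k) b -> B (S k) c ->
     B k (mul (mul a b) c) /\ D k (mul (mul a b) c)).
  { intros k. destruct (HB1 k) as [o1 [e1 s1]].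
    destruct (HfS (fun g => B k g /\ D k g)) as [h1 [h2 [h3 h4]]].
    - split; [apply op_and; [apply (tg_top _ _ _ _ G)|auto|apply HD]|split; auto; apply HD].
    - intros a b c Ha Hb Hc. apply h4; auto. }
  exists B. constructor.
  - intro k; apply HB1.
  - intro k; apply HB1.
  - intro k; apply HB1.
  - intro g; simpl; auto.
  - intros k a b c Ha Hb Hc; apply HB2; auto.
  - intros U oU Ue. destruct (Hbase U oU Ue) as [n Hn]. exists (S n). intros g Hg.
    apply Hn. destruct (HB2 n g e e Hg (proj1 (proj2 (HB1 _))) (proj1 (proj2 (HB1 _)))) as [_ Hd].
    rewrite !(tg_unit_r _ _ _ _ G) in Hd; auto.
Qed.

Lemma metrizable_of_base {X} (op : (X -> Prop) -> Prop) mul inv e (D : nat -> X -> Prop) :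
  is_topological_group op mul inv e -> T1 op ->
  (forall n, op (D n) /\ D n e) ->
  (forall U, op U -> U e -> exists n, forall g, D n g -> U g) ->
  metrizable op.
Proof.
  intros G HT HD Hb. destruct (goodB_exists op mul inv e D G HD Hb) as [B HB].
  apply (metric_from_B op mul inv e B G HT HB).
Qed.

Lemma seq_extract {X} (op : (X -> Prop) -> Prop) :
  has_nontrivial_convergent_sequence op ->
  exists (s : nat -> X) (a : X), (forall n, s n <> a) /\ (forall n m, s n = s m -> n = m) /\
    (forall W, op W -> W a -> exists N, forall n, (N <= n)%nat -> W (s n)).
Proof.
  intros [A [f [g [Hgf [Hfg [Cf Cg]]]]]].
  assert (Hc : forall n, conv_seq_set (/ INR (S n))).
  { intro n; right; exists (S n); split; auto; lia. }
  assert (Hc0 : conv_seq_set 0) by (left; auto).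
  set (c := fun n => exist conv_seq_set _ (Hc n)).
  set (c0 := exist conv_seq_set _ Hc0).
  assert (Hinj : forall u v, proj1_sig (f u) = proj1_sig (f v) -> u = v).
  { intros u v H. rewrite <- (Hgf u), <- (Hgf v). f_equal.
    destruct (f u) as [p pp], (f v) as [q pq]. simpl in H. subst q.
    rewrite (proof_irrelevance _ pp pq); auto. }
  assert (Hpos : forall n, 0 < INR (S n)) by (intro n; apply lt_0_INR; lia).
  exists (fun n => proj1_sig (f (c n))), (proj1_sig (f c0)). split; [|split].
  - intros n H. apply Hinj in H. apply (f_equal (@proj1_sig _ _)) in H. change (/ INR (S n) = 0) in H.
    pose proof (Hpos n). apply (Rinv_neq_0_compat (INR (S n))); lra.
  - intros n m H. apply Hinj in H. apply (f_equal (@proj1_sig _ _)) in H. change (/ INR (S n) = / INR (S m)) in H.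
    apply Rinv_eq_reg in H. apply INR_eq in H. lia.
  - intros W oW Wa.
    assert (oV : subspace_open op A (fun p => W (proj1_sig p))) by (exists W; split; auto; tauto).
    destruct (Cf _ oV) as [U [oU HU]].
    assert (U0 : U 0) by (apply (HU c0); auto).
    destruct (oU 0 U0) as [eps [Heps Hb]].
    destruct (archimed_cor1 eps Heps) as [N [HN HN0]].
    exists N. intros n Hn. apply (HU (c n)). change (U (/ INR (S n))). apply Hb.
    rewrite Rminus_0_r, Rabs_right; [|left; apply Rinv_0_lt_compat; auto].
    eapply Rle_lt_trans; [|apply HN].
    apply Rinv_le_contravar; [apply lt_0_INR; lia|]. apply le_INR; lia.
Qed.

Lemma normal_X {X} (op : (X -> Prop) -> Prop) : hereditarily_normal op ->
  forall F H : X -> Prop, op (fun x => ~ F x) -> op (fun x => ~ H x) -> (forall x, F x -> H x -> False) ->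
  exists U V, op U /\ op V /\ (forall x, F x -> U x) /\ (forall x, H x -> V x) /\
    (forall x, U x -> V x -> False).
Proof.
  intros HN F H oF oH Hd.
  destruct (HN (fun _ => True) (fun z => F (proj1_sig z)) (fun z => H (proj1_sig z))) as
    [U' [V' [[U1 [oU1 HU1]] [[V1 [oV1 HV1]] [HFU [HHV HUV]]]]]].
  - exists (fun x => ~ F x); split; auto; tauto.
  - exists (fun x => ~ H x); split; auto; tauto.
  - intros z; apply Hd.
  - exists U1, V1. repeat split; auto.
    + intros x Fx. apply (HU1 (exist _ x I)). apply HFU; auto.
    + intros x Hx. apply (HV1 (exist _ x I)). apply HHV; auto.
    + intros x Ux Vx. apply (HUV (exist _ x I)); [apply HU1|apply HV1]; auto.
Qed.

Lemma normal_Z {X} (op : (X -> Prop) -> Prop) (a : X) : is_topology op -> T1 op -> hereditarily_normal op ->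
  forall F H : X -> Prop,
  (exists C, op C /\ forall x, x <> a -> (~ F x <-> C x)) ->
  (exists C, op C /\ forall x, x <> a -> (~ H x <-> C x)) ->
  (forall x, x <> a -> F x -> H x -> False) ->
  exists U V, op U /\ op V /\ (forall x, x <> a -> F x -> U x) /\ (forall x, x <> a -> H x -> V x) /\
    (forall x, U x -> V x -> False) /\ ~ U a /\ ~ V a.
Proof.
  intros T HT1 HN F H [CF [oCF HCF]] [CH [oCH HCH]] Hd.
  destruct (HN (fun x => x <> a) (fun z => F (proj1_sig z)) (fun z => H (proj1_sig z))) as
    [U' [V' [[U1 [oU1 HU1]] [[V1 [oV1 HV1]] [HFU [HHV HUV]]]]]].
  - exists CF; split; auto. intros [x hx]; simpl; auto.
  - exists CH; split; auto. intros [x hx]; simpl; auto.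
  - intros [x hx]; simpl; apply Hd; auto.
  - exists (fun x => x <> a /\ U1 x), (fun x => x <> a /\ V1 x).
    split; [apply op_and; auto; apply op_neq; auto|].
    split; [apply op_and; auto; apply op_neq; auto|].
    split; [intros x hx Fx; split; auto; apply (HU1 (exist _ x hx)); apply HFU; auto|].
    split; [intros x hx Hx; split; auto; apply (HV1 (exist _ x hx)); apply HHV; auto|].
    split; [|split; intros [h _]; auto].
    intros x [hx Ux] [_ Vx]. apply (HUV (exist _ x hx)); [apply HU1|apply HV1]; auto.
Qed.

Lemma finite_removal {X} (op : (X -> Prop) -> Prop) (s : nat -> X) (z : X) :
  is_topology op -> T1 op -> forall N, exists V, op V /\ V z /\
   forall n, (n < N)%nat -> s n <> z -> ~ V (s n).
Proof.
  intros T HT N; induction N as [|N [V [oV [Vz HV]]]].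
  - exists (fun _ => True); repeat split; auto; [apply (top_full _ T)| intros; lia].
  - destruct (classic (s N = z)) as [E|Ne].
    + exists V; repeat split; auto. intros n Hn Hne.
      destruct (Nat.eq_dec n N); [subst; contradiction|apply HV; auto; lia].
    + destruct (HT z (s N) (not_eq_sym Ne)) as [W [oW [Wz nW]]].
      exists (fun x => V x /\ W x); repeat split; auto; [apply op_and; auto|].
      intros n Hn Hne [Vn Wn]. destruct (Nat.eq_dec n N); [subst; contradiction|].
      apply (HV n); auto; lia.
Qed.

Lemma seq_closed {X} (op : (X -> Prop) -> Prop) (s : nat -> X) (a : X) :
  is_topology op -> T1 op -> hereditarily_normal op ->
  (forall W, op W -> W a -> exists N, forall n, (N <= n)%nat -> W (s n)) ->
  forall I : nat -> Prop,
  exists C, op C /\ forall x, x <> a -> (~ (exists n, I n /\ x = s n) <-> C x).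
Proof.
  intros T HT HN Hconv I.
  exists (fun x => x <> a /\ ~ (exists n, I n /\ x = s n)). split; [|intros x hx; tauto].
  apply op_local; auto. intros z [hz nE].
  destruct (normal_X op HN (fun x => x = z) (fun x => x = a)) as [Uz [Ua [oUz [oUa [HUz [HUa Hd]]]]]].
  - apply op_neq; auto.
  - apply op_neq; auto.
  - intros x -> ->; auto.
  - destruct (Hconv Ua oUa (HUa a eq_refl)) as [N HNt].
    destruct (finite_removal op s z T HT N) as [V [oV [Vz HV]]].
    exists (fun x => Uz x /\ V x). split; [apply op_and; auto|]. split; [split; auto|].
    intros y [Uy Vy]. split.
    + intro; subst. apply (Hd a); auto.
    + intros [n [In ->]]. destruct (Compare_dec.le_lt_dec N n) as [h|h].
      * apply (Hd (s n)); auto.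
      * destruct (classic (s n = z)) as [E|Ne].
        -- apply nE; exists n; auto.
        -- apply (HV n h Ne); auto.
Qed.

Lemma half_gdelta {X} (op : (X -> Prop) -> Prop) mul inv e (s : nat -> X) (a : X) (I : nat -> Prop) (NI : X -> Prop) :
  is_topological_group op mul inv e -> T1 op -> hereditarily_normal op ->
  (forall n, s n <> a) ->
  (forall W, op W -> W a -> exists N, forall n, (N <= n)%nat -> W (s n)) ->
  (forall N, exists n, (N <= n)%nat /\ I n) ->
  op NI -> (forall n, I n -> NI (s n)) ->
  exists W : nat -> X -> Prop, (forall k, op (W k) /\ W k a) /\
    forall y, y <> a -> ~ NI y -> exists k, ~ W k y.
Proof.
  intros G HT HN Hsa Hconv Hinf oNI HNI.
  pose proof (tg_top _ _ _ _ G) as T.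
  destruct (normal_Z op a T HT HN (fun x => exists n, I n /\ x = s n) (fun x => ~ NI x)) as
    [U [V [oU [oV [HU [HV [HUV _]]]]]]].
  - apply seq_closed; auto.
  - exists NI; split; auto. intros; tauto.
  - intros x _ [n [In ->]] H. apply H; auto.
  - exists (fun n y => I n -> U (mul (mul (s n) (inv a)) y)). split.
    + intro k. split.
      * destruct (classic (I k)) as [Ik|nIk].
        -- apply (op_ext op (fun y => U (mul (mul (s k) (inv a)) y))); [intro; tauto|].
           apply (op_ltrans _ _ _ _ G); auto.
        -- apply (op_ext op (fun _ => True)); [intro; tauto|apply (top_full _ T)].
      * intro Ik. rewrite (mul_cancel_r _ _ _ _ G). apply HU; auto. eauto.
    + intros y hy nNy.
      assert (oR : op (fun g => V (mul g (mul (inv a) y)))) by (apply (op_rtrans _ _ _ _ G); auto).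
      destruct (Hconv _ oR) as [N HNt].
      { rewrite (mul_cancel_l _ _ _ _ G). apply HV; auto. }
      destruct (Hinf N) as [n [Hn In]]. exists n. intro Wn.
      specialize (Wn In). rewrite <- (tg_assoc _ _ _ _ G) in Wn.
      apply (HUV _ Wn). apply HNt; auto.
Qed.

Lemma gdelta_a {X} (op : (X -> Prop) -> Prop) mul inv e (s : nat -> X) (a : X) :
  is_topological_group op mul inv e -> T1 op -> hereditarily_normal op ->
  (forall n, s n <> a) -> (forall n m, s n = s m -> n = m) ->
  (forall W, op W -> W a -> exists N, forall n, (N <= n)%nat -> W (s n)) ->
  exists T : nat -> X -> Prop, (forall k, op (T k) /\ T k a) /\
    forall y, y <> a -> exists k, ~ T k y.
Proof.
  intros G HT HN Hsa Hinj Hconv.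
  pose proof (tg_top _ _ _ _ G) as Tp.
  set (IE := fun n => exists k, n = (2 * k)%nat).
  set (IO := fun n => exists k, n = (2 * k + 1)%nat).
  destruct (normal_Z op a Tp HT HN (fun x => exists n, IE n /\ x = s n) (fun x => exists n, IO n /\ x = s n)) as
    [NE [NO [oNE [oNO [HNE [HNO [HEO _]]]]]]].
  - apply seq_closed; auto.
  - apply seq_closed; auto.
  - intros x _ [n [[k ->] ->]] [m [[k' ->] E]]. apply Hinj in E. lia.
  - destruct (half_gdelta op mul inv e s a IE NE G HT HN Hsa Hconv) as [WE [HWE1 HWE2]]; auto.
    { intro N; exists (2 * N)%nat; split; [lia|exists N; auto]. }
    { intros n In. apply HNE; eauto. }
    destruct (half_gdelta op mul inv e s a IO NO G HT HN Hsa Hconv) as [WO [HWO1 HWO2]]; auto.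
    { intro N; exists (2 * N + 1)%nat; split; [lia|exists N; auto]. }
    { intros n In. apply HNO; eauto. }
    exists (fun k y => WE k y /\ WO k y). split.
    + intro k; destruct (HWE1 k), (HWO1 k); split; auto. apply op_and; auto.
    + intros y hy. destruct (classic (NE y)) as [Ey|nEy].
      * assert (nOy : ~ NO y) by (intro; apply (HEO y); auto).
        destruct (HWO2 y hy nOy) as [k Hk]. exists k; tauto.
      * destruct (HWE2 y hy nEy) as [k Hk]. exists k; tauto.
Qed.

Lemma base_a {X} (op : (X -> Prop) -> Prop) (a : X) (T : nat -> X -> Prop) :
  is_topology op -> T1 op -> hereditarily_normal op -> countably_compact op ->
  (forall k, op (T k) /\ T k a) -> (forall y, y <> a -> exists k, ~ T k y) ->
  exists D : nat -> X -> Prop, (forall n, op (D n) /\ D n a) /\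
    forall U, op U -> U a -> exists n, forall g, D n g -> U g.
Proof.
  intros Tp HT HN HC HT1 HT2.
  assert (Hex : forall n, exists PQ : (X -> Prop) * (X -> Prop),
     op (fst PQ) /\ op (snd PQ) /\ fst PQ a /\ (forall x, ~ T n x -> snd PQ x) /\
     (forall x, fst PQ x -> snd PQ x -> False)).
  { intro n. destruct (normal_X op HN (fun x => x = a) (fun x => ~ T n x)) as [P [Q [oP [oQ [HP [HQ HPQ]]]]]].
    - apply op_neq; auto.
    - apply (op_ext op (T n)); [intro; tauto|apply HT1].
    - intros x -> H; apply H, HT1.
    - exists (P, Q); simpl; auto. }
  pose (PQ := fun n => proj1_sig (constructive_indefinite_description _ (Hex n))).
  assert (HPQ : forall n, op (fst (PQ n)) /\ op (snd (PQ n)) /\ fst (PQ n) a /\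
     (forall x, ~ T n x -> snd (PQ n) x) /\ (forall x, fst (PQ n) x -> snd (PQ n) x -> False)).
  { intro n; unfold PQ; destruct (constructive_indefinite_description _ _); auto. }
  pose (D := fix D N := match N with O => fst (PQ O) | S N => fun x => D N x /\ fst (PQ (S N)) x end).
  assert (HD : forall N, op (D N) /\ D N a).
  { induction N as [|N [o1 a1]]; simpl.
    - split; apply HPQ.
    - split; [apply op_and; auto; apply HPQ|split; auto; apply HPQ]. }
  assert (HDk : forall N x, D N x -> forall k, (k <= N)%nat -> fst (PQ k) x).
  { induction N as [|N IH]; simpl; intros x Dx k Hk.
    - replace k with O by lia; auto.
    - destruct Dx as [D1 D2]. destruct (Nat.eq_dec k (S N)); [subst; auto|apply IH; auto; lia]. }
  exists D. split; auto.
  intros U oU Ua.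
  set (C := fun n => match n with O => U | S m => snd (PQ m) end).
  destruct (HC C) as [N HN'].
  - intros [|m]; simpl; auto. apply HPQ.
  - intro x. destruct (classic (U x)) as [Ux|nUx]; [exists O; auto|].
    assert (x <> a) by (intro; subst; auto). destruct (HT2 x H) as [k Hk].
    exists (S k). simpl. apply HPQ; auto.
  - exists N. intros g Dg. destruct (HN' g) as [[|m] [Hm Cg]]; auto.
    simpl in Cg. exfalso. apply (proj2 (proj2 (proj2 (proj2 (HPQ m)))) g); auto.
    apply (HDk N); auto; lia.
Qed.

Theorem corollary2p5 (X : Type) (op : (X -> Prop) -> Prop)
  (mul : X -> X -> X) (inv : X -> X) (e : X) :
  is_topological_group op mul inv e ->
  T1 op ->
  countably_compact op ->
  hereditarily_normal op ->
  has_nontrivial_convergent_sequence op ->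
  metrizable op.
Proof.
  intros G HT HC HN Hseq.
  pose proof (tg_top _ _ _ _ G) as Tp.
  destruct (seq_extract op Hseq) as [s [a [Hsa [Hinj Hconv]]]].
  destruct (gdelta_a op mul inv e s a G HT HN Hsa Hinj Hconv) as [T [HT1 HT2]].
  destruct (base_a op a T Tp HT HN HC HT1 HT2) as [D [HD Hb]].
  apply (metrizable_of_base op mul inv e (fun n g => D n (mul a g)) G HT).
  - intro n. split; [apply (op_ltrans _ _ _ _ G); apply HD|].
    rewrite (tg_unit_r _ _ _ _ G). apply HD.
  - intros U oU Ue.
    destruct (Hb (fun x => U (mul (inv a) x))) as [n Hn].
    + apply (op_ltrans _ _ _ _ G); auto.
    + rewrite (tg_inv_l _ _ _ _ G); auto.
    + exists n. intros g Dg. specialize (Hn _ Dg).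
      rewrite (tg_assoc _ _ _ _ G), (tg_inv_l _ _ _ _ G), (tg_unit_l _ _ _ _ G) in Hn. auto.
Qed.
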